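(* Let $G^\sigma$ be a connected oriented graph of order $n\geq 5$. Then $sr(G^\sigma)=2$ if and only if the underlying graph of $G^\sigma$ is a complete bipartite graph or a complete tripartite graph and every cycle of length $4$ in $G^\sigma$ is evenly-oriented.
   Context: An oriented graph $G^\sigma$ is a simple graph $G$ (underlying graph) together with an orientation of each edge. Its skew-adjacency matrix $S(G^\sigma)=(s_{ij})$ has $s_{ij}=1$ if there is an arc from $v_i$ to $v_j$, $s_{ij}=-1$ if there is an arc from $v_j$ to $v_i$, and $0$ otherwise; the skew-rank $sr(G^\sigma)$ is the rank of $S(G^\sigma)$. For an even cycle $u_1\cdots u_ku_1$, its sign is the sign of $\prod_{i=1}^k s_{u_iu_{i+1}}$ ($u_{k+1}=u_1$); the cycle is evenly-oriented if this sign is positive and oddly-oriented if negative. *)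

(* Defs.v *)
From mathcomp Require Import all_boot all_order all_algebra.
Set Implicit Arguments. Unset Strict Implicit. Unset Printing Implicit Defensive.
Import Order.TTheory GRing.Theory Num.Theory.
Local Open Scope ring_scope.

Definition oriented_graph (n : nat) (arc : rel 'I_n) : Prop :=
  (forall u, ~~ arc u u) /\ (forall u v, arc u v -> ~~ arc v u).

Definition und (n : nat) (arc : rel 'I_n) : rel 'I_n :=
  fun u v => arc u v || arc v u.

Definition sgn_entry (n : nat) (arc : rel 'I_n) (u v : 'I_n) : int :=
  if arc u v then 1 else if arc v u then -1 else 0.

Definition skew_adj (n : nat) (arc : rel 'I_n) : 'M[rat]_n :=
  \matrix_(i, j) (sgn_entry arc i j)%:~R.

Definition skew_rank (n : nat) (arc : rel 'I_n) : nat := \rank (skew_adj arc).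

Definition connected_graph (n : nat) (e : rel 'I_n) : Prop :=
  forall u v, connect e u v.

Definition complete_multipartite (n k : nat) (e : rel 'I_n) : Prop :=
  exists part : 'I_n -> 'I_k,
    (forall c : 'I_k, exists v, part v = c) /\
    (forall u v, e u v = (part u != part v)).

Definition is_4cycle (n : nat) (e : rel 'I_n) (u1 u2 u3 u4 : 'I_n) : Prop :=
  uniq [:: u1; u2; u3; u4] /\ e u1 u2 /\ e u2 u3 /\ e u3 u4 /\ e u4 u1.

Definition evenly_oriented4 (n : nat) (arc : rel 'I_n) (u1 u2 u3 u4 : 'I_n) : Prop :=
  0 < sgn_entry arc u1 u2 * sgn_entry arc u2 u3 * sgn_entry arc u3 u4
      * sgn_entry arc u4 u1.

(* Main.v *)
Require Import Defs.
From mathcomp Require Import all_boot all_order all_algebra.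
From mathcomp Require Import ring zify.
Set Implicit Arguments. Unset Strict Implicit. Unset Printing Implicit Defensive.
Import Order.TTheory GRing.Theory Num.Theory.
Local Open Scope ring_scope.

Definition tri (x : int) := [|| x == 0, x == 1 | x == -1].
Ltac tcase H := move: H; rewrite /tri => /or3P [] /eqP ->.
Definition ztri (p q r : int) :=
  [&& (p == 0) && (q == 0) ==> (r == 0), (p == 0) && (r == 0) ==> (q == 0)
    & (q == 0) && (r == 0) ==> (p == 0)].
Definition cyc (x y z w : int) := [&& x != 0, y != 0, z != 0 & w != 0] ==> (0 < x * y * z * w).

Lemma bf_cycle (a b c d e f : int) : tri a -> tri b -> tri c -> tri d -> tri e -> tri f ->
  a * f - b * e + c * d = 0 -> a != 0 -> c != 0 -> d != 0 -> f != 0 ->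
  0 < a * d * f * (- c).
Proof.
move=> Ha Hb Hc Hd He Hf; tcase Ha; tcase Hb; tcase Hc; tcase Hd; tcase He; tcase Hf; by [].
Qed.

Lemma bf_K4 (a b c d e f : int) : tri a -> tri b -> tri c -> tri d -> tri e -> tri f ->
  a != 0 -> b != 0 -> c != 0 -> d != 0 -> e != 0 -> f != 0 ->
  a * f - b * e + c * d != 0.
Proof.
move=> Ha Hb Hc Hd He Hf; tcase Ha; tcase Hb; tcase Hc; tcase Hd; tcase He; tcase Hf; by [].
Qed.

Lemma bf_pf (a b c d e f : int) : tri a -> tri b -> tri c -> tri d -> tri e -> tri f ->
  ztri a d b -> ztri a e c -> ztri b f c -> ztri d f e ->
  [|| a == 0, b == 0, c == 0, d == 0, e == 0 | f == 0] ->
  cyc a d f (-c) -> cyc a e (-f) (-b) -> cyc b (-d) e (-c) ->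
  a * f - b * e + c * d = 0.
Proof.
move=> Ha Hb Hc Hd He Hf; tcase Ha; tcase Hb; tcase Hc; tcase Hd; tcase He; tcase Hf; by [].
Qed.

Lemma bf_sq (a : int) : tri a -> a != 0 -> a * a = 1.
Proof. by move=> Ha; tcase Ha. Qed.

Lemma pig k (Hk : (k <= 3)%N) (a b c d : 'I_k) :
  [|| a == b, a == c, a == d, b == c, b == d | c == d].
Proof.
case: a b c d => [a Ha] [b Hb] [c Hc] [d Hd]; rewrite -!val_eqE /=.
apply/negPn/negP; rewrite !negb_or; lia.
Qed.

Lemma eq_ztri (T : eqType) (a b c : T) :
  [&& (a == b) && (b == c) ==> (a == c), (a == b) && (a == c) ==> (b == c)
    & (b == c) && (a == c) ==> (a == b)].
Proof.
by apply/and3P; split; apply/implyP => /andP [/eqP -> /eqP ->].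
Qed.
Definition pf (R : ringType) n (m : 'I_n -> 'I_n -> R) i j k l :=
  m i j * m k l - m i k * m j l + m i l * m j k.

Lemma pf_minors (F : idomainType) n (m : 'I_n -> 'I_n -> F) :
  (forall x y, m y x = - m x y) ->
  (forall i j k l, m j k * pf m i j k l = 0) -> forall i j k l, pf m i j k l = 0.
Proof.
move=> sk mi i j k l.
have H1 := mi k i j l; have H2 := mi j i k l; have H3 := mi j i l k.
have E1 : pf m k i j l = pf m i j k l by rewrite /pf (sk i k) (sk j k); ring.
have E2 : pf m j i k l = - pf m i j k l by rewrite /pf (sk i j); ring.
have E3 : pf m j i l k = pf m i j k l by rewrite /pf (sk i j) (sk k l); ring.
rewrite E1 in H1; rewrite E2 mulrN in H2; rewrite E3 in H3.
move/eqP: H2; rewrite oppr_eq0 => /eqP H2.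
have : pf m i j k l * pf m i j k l = 0.
  transitivity (m k l * (m i j * pf m i j k l) - m j l * (m i k * pf m i j k l)
     + m j k * (m i l * pf m i j k l)); first by rewrite /pf; ring.
  by rewrite H1 H2 H3; ring.
by move/eqP; rewrite mulf_eq0 orbb => /eqP.
Qed.

Lemma minor_rank2 (F : comRingType) n (m : 'I_n -> 'I_n -> F) (C : 'M[F]_(n,2)) (R : 'M[F]_(2,n)) :
 (forall x y, m x y = (C *m R) x y) -> (forall x y, m y x = - m x y) -> (forall x, m x x = 0) ->
 forall i j k l, m j k * pf m i j k l = 0.
Proof.
move=> HCR sk d i j k l.
have -> : m j k * pf m i j k l = m i j * (m j k * m k l - m j l * m k k)
   - m i k * (m j j * m k l - m j l * m k j) + m i l * (m j j * m k k - m j k * m k j).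
  by rewrite (d k) (d j) (sk j k) /pf; ring.
rewrite !HCR !mxE !big_ord_recr !big_ord0 /=; ring.
Qed.

Lemma rank2_fact (F : fieldType) n (A : 'M[F]_n) :
  \rank A = 2%N -> exists (C : 'M[F]_(n,2)) (R : 'M[F]_(2,n)), A = C *m R.
Proof.
move=> Hr; have := mulmx_base A; move: (col_base A) (row_base A); rewrite Hr.
by move=> C R E; exists C, R.
Qed.

Lemma rank_le2 (F : fieldType) n (W : 'M[F]_(n,2)) (Z : 'M[F]_(2,n)) : (\rank (W *m Z) <= 2)%N.
Proof. exact: leq_trans (mxrankM_maxl _ _) (rank_leq_col _). Qed.

Lemma rank_ge2 (F : fieldType) n (A : 'M[F]_n) p q :
  A p q != 0 -> A p p = 0 -> A q q = 0 -> A q p = - A p q -> (2 <= \rank A)%N.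
Proof.
move=> Hpq Hp Hq Hqp.
pose f := fun k : 'I_2 => if k == ord0 then p else q.
pose g := fun k : 'I_2 => if k == ord0 then q else p.
have Hle : (\rank (mxsub f g A) <= \rank A)%N.
  rewrite -[A in mxsub _ _ A]mul1mx mxsub_mul -[A in colsub _ A]mulmx1 -mulmx_colsub.
  exact: leq_trans (mxrankM_maxr _ _) (mxrankM_maxl _ _).
apply: leq_trans Hle.
set M := mxsub f g A.
have HM : M *m ((A p q)^-2 *: M) = 1%:M.
  apply/matrixP => x y; rewrite !mxE big_ord_recr big_ord_recr big_ord0 /= !mxE.
  rewrite /f /g.
  case: x => [[|[|x]] Hx] //; case: y => [[|[|y]] Hy] //=.
  - by rewrite ?Hp ?Hq ?Hqp; field.
  - by rewrite ?Hp ?Hq ?Hqp; field.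
  - by rewrite ?Hp ?Hq ?Hqp; field.
  - by rewrite ?Hp ?Hq ?Hqp; field.
have [HU _] := mulmx1_unit HM.
by rewrite (mxrank_unit HU).
Qed.

Lemma sgn_tri n (arc : rel 'I_n) x y : tri (sgn_entry arc x y).
Proof. by rewrite /sgn_entry /tri; case: (arc x y); case: (arc y x). Qed.

Lemma sgn_skew n (arc : rel 'I_n) : oriented_graph arc ->
  forall x y, sgn_entry arc y x = - sgn_entry arc x y.
Proof.
case=> _ H x y; rewrite /sgn_entry.
case E: (arc x y); case E': (arc y x) => //.
by move: (H _ _ E); rewrite E'.
Qed.

Lemma sgn_diag n (arc : rel 'I_n) : oriented_graph arc -> forall x, sgn_entry arc x x = 0.
Proof. by case=> H _ x; rewrite /sgn_entry (negbTE (H x)). Qed.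

Lemma sgn_eq0 n (arc : rel 'I_n) x y : (sgn_entry arc x y == 0) = ~~ und arc x y.
Proof. by rewrite /sgn_entry /und; case: (arc x y); case: (arc y x). Qed.

Lemma sgn_neq0 n (arc : rel 'I_n) x y : (sgn_entry arc x y != 0) = und arc x y.
Proof. by rewrite sgn_eq0 negbK. Qed.

Lemma und_sym n (arc : rel 'I_n) x y : und arc x y = und arc y x.
Proof. by rewrite /und orbC. Qed.

Lemma und_irr n (arc : rel 'I_n) : oriented_graph arc -> forall x, und arc x x = false.
Proof. by case=> H _ x; rewrite /und orbb (negbTE (H x)). Qed.

Lemma neighbor n (e : rel 'I_n) : connected_graph e -> forall x y, x != y -> exists t, e y t.
Proof.
move=> Hc x y Hxy; case/connectP: (Hc y x) => [[|t p]] /=.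
  by move=> _ E; rewrite E eqxx in Hxy.
by case/andP => Ht _ _; exists t.
Qed.

Lemma pf_int n (arc : rel 'I_n) : oriented_graph arc -> skew_rank arc = 2%N ->
  forall i j k l, pf (sgn_entry arc) i j k l = 0.
Proof.
move=> Ho Hr i j k l.
have [C [R E]] := rank2_fact Hr.
pose m := fun x y => skew_adj arc x y.
have sk : forall x y, m y x = - m x y.
  by move=> x y; rewrite /m !mxE (sgn_skew Ho x y) intrN.
have d : forall x, m x x = 0 by move=> x; rewrite /m mxE (sgn_diag Ho) .
have HCR : forall x y, m x y = (C *m R) x y by move=> x y; rewrite /m -E.
have := pf_minors sk (minor_rank2 HCR sk d) i j k l.
have -> : pf m i j k l = (pf (sgn_entry arc) i j k l)%:~R.
  by rewrite /pf /m !mxE intrD intrB !intrM.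
by move/eqP; rewrite intr_eq0 => /eqP.
Qed.

Lemma even_of_pf n (arc : rel 'I_n) : oriented_graph arc ->
  (forall i j k l, pf (sgn_entry arc) i j k l = 0) ->
  forall u1 u2 u3 u4, is_4cycle (und arc) u1 u2 u3 u4 -> evenly_oriented4 arc u1 u2 u3 u4.
Proof.
move=> Ho Hpf u1 u2 u3 u4 [_ [e12 [e23 [e34 e41]]]].
rewrite /evenly_oriented4 (sgn_skew Ho u1 u4).
apply: (bf_cycle (sgn_tri _ _ _) (sgn_tri arc u1 u3) (sgn_tri _ _ _) (sgn_tri _ _ _)
   (sgn_tri arc u2 u4) (sgn_tri _ _ _)).
- by have := Hpf u1 u2 u3 u4; rewrite /pf.
- by rewrite sgn_neq0.
- by rewrite sgn_neq0 und_sym.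
- by rewrite sgn_neq0.
- by rewrite sgn_neq0.
Qed.

Lemma tr_of_pf n (arc : rel 'I_n) : oriented_graph arc -> connected_graph (und arc) ->
  (forall i j k l, pf (sgn_entry arc) i j k l = 0) ->
  forall x y z, ~~ und arc x y -> ~~ und arc y z -> ~~ und arc x z.
Proof.
move=> Ho Hc Hpf x y z nxy nyz; apply/negP => exz.
have yx : x != y by apply/eqP => E; subst; rewrite exz in nyz.
have [t eyt] := neighbor Hc yx.
have H1 : sgn_entry arc x y = 0 by apply/eqP; rewrite sgn_eq0.
have H2 : sgn_entry arc z y = 0 by apply/eqP; rewrite sgn_eq0 und_sym.
have := Hpf x z y t; rewrite /pf H1 H2 !mul0r mulr0 subr0 addr0 => /eqP.
by rewrite mulf_eq0 !sgn_eq0 exz eyt.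
Qed.

Lemma k4_of_pf n (arc : rel 'I_n) :
  (forall i j k l, pf (sgn_entry arc) i j k l = 0) ->
  forall a b c d, und arc a b -> und arc a c -> und arc a d -> und arc b c ->
    und arc b d -> und arc c d -> False.
Proof.
move=> Hpf a b c d ab ac ad bc bd cd.
have := bf_K4 (sgn_tri arc a b) (sgn_tri arc a c) (sgn_tri arc a d) (sgn_tri arc b c)
   (sgn_tri arc b d) (sgn_tri arc c d).
rewrite !sgn_neq0 ab ac ad bc bd cd => /(_ isT isT isT isT isT isT).
by have := Hpf a b c d; rewrite /pf => ->; rewrite eqxx.
Qed.

Ltac fin := intros; match goal with H : is_true false |- _ => discriminate H | _ => done end.

Lemma mk_multi n (e : rel 'I_n) (esym : forall x y, e x y = e y x) (eirr : forall x, e x x = false)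
 (tr : forall x y z, ~~ e x y -> ~~ e y z -> ~~ e x z)
 (k4 : forall a b c d, e a b -> e a c -> e a d -> e b c -> e b d -> e c d -> False)
 u0 v0 : e u0 v0 -> complete_multipartite 2 e \/ complete_multipartite 3 e.
Proof.
move=> euv.
have T : forall x y z, ~~ e x y && ~~ e y z ==> ~~ e x z.
  by move=> x y z; apply/implyP => /andP [a b]; apply: tr a b.
have K : forall a b c d, ~~ [&& e a b, e a c, e a d, e b c, e b d & e c d].
  by move=> a b c d; apply/negP => /and5P [h1 h2 h3 h4 /andP [h5 h6]]; apply: (k4 a b c d).
case: (boolP [exists w, e w u0 && e w v0]) => [/existsP [w /andP [ewu ewv]] | /existsPn nw].
- right; exists (fun x => if ~~ e x u0 then ord0 else if ~~ e x v0 then (@Ordinal 3 1 isT)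
                         else (@Ordinal 3 2 isT)); split.
  + case=> [[|[|[|c]]] Hc] //.
    * by exists u0; apply: val_inj; rewrite /= eirr.
    * by exists v0; apply: val_inj; rewrite /= esym euv eirr.
    * by exists w; apply: val_inj; rewrite /= ewu ewv.
  + move=> x y.
    have := T x u0 y; have := T x y u0; have := T y x u0.
    have := T x v0 y; have := T x y v0; have := T y x v0.
    have := T u0 x v0; have := T u0 y v0; have := K x y u0 v0.
    rewrite ?(esym u0 y) ?(esym y x) ?(esym u0 x) ?(esym v0 y) ?(esym v0 x) ?(esym v0 u0) ?euv.
    case: (e x u0); case: (e y u0); case: (e x v0); case: (e y v0) => //=;
     case: (e x y); fin.
- left; exists (fun x => if ~~ e x u0 then ord0 else ord_max); split.
  + case=> [[|[|c]] Hc] //.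
    * by exists u0; apply: val_inj; rewrite /= eirr.
    * by exists v0; apply: val_inj; rewrite /= esym euv.
  + move=> x y.
    have := T x u0 y; have := T x y u0; have := T y x u0.
    have := T x v0 y; have := T x y v0; have := T y x v0.
    have := T u0 x v0; have := T u0 y v0; have := nw x; have := nw y.
    rewrite ?(esym u0 y) ?(esym y x) ?(esym u0 x) ?(esym v0 y) ?(esym v0 x) ?(esym v0 u0) ?euv.
    case: (e x u0); case: (e y u0); case: (e x v0); case: (e y v0) => //=;
     case: (e x y); fin.
Qed.

Lemma uniq4 (T : eqType) (a b c d : T) : a != b -> a != c -> a != d -> b != c -> b != d ->
  c != d -> uniq [:: a; b; c; d].
Proof. by move=> *; rewrite /= !inE !negb_or; do ! (apply/andP; split) => //. Qed.

Lemma back_pf n (arc : rel 'I_n) : oriented_graph arc ->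
  forall k (Hk : (k <= 3)%N) (part : 'I_n -> 'I_k),
  (forall u v, und arc u v = (part u != part v)) ->
  (forall u1 u2 u3 u4 : 'I_n, is_4cycle (und arc) u1 u2 u3 u4 ->
        evenly_oriented4 arc u1 u2 u3 u4) ->
  forall p q, und arc p q -> forall i j, pf (sgn_entry arc) p q i j = 0.
Proof.
move=> Ho k Hk part Hpart Hcyc p q epq i j.
have sk := sgn_skew Ho; have dg := sgn_diag Ho.
case: (eqVneq i p) => [->|ip]; first by rewrite /pf dg (sk p q); ring.
case: (eqVneq i q) => [->|iq]; first by rewrite /pf dg; ring.
case: (eqVneq j p) => [->|jp]; first by rewrite /pf dg (sk p i) (sk p q); ring.
case: (eqVneq j q) => [->|jq]; first by rewrite /pf dg (sk q i); ring.
case: (eqVneq i j) => [->|ij]; first by rewrite /pf dg; ring.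
have pq : p != q by apply/eqP => E; rewrite E (und_irr Ho) in epq.
have pi : p != i by rewrite eq_sym.
have pj : p != j by rewrite eq_sym.
have qi : q != i by rewrite eq_sym.
have qj : q != j by rewrite eq_sym.
have ztri_of : forall x y z, ztri (sgn_entry arc x y) (sgn_entry arc y z) (sgn_entry arc x z).
  by move=> x y z; rewrite /ztri !sgn_eq0 !Hpart !negbK; exact: eq_ztri.
have cyc_of : forall w x y z, uniq [:: w; x; y; z] ->
    cyc (sgn_entry arc w x) (sgn_entry arc x y) (sgn_entry arc y z) (sgn_entry arc z w).
  move=> w x y z U; apply/implyP => /and4P [h1 h2 h3 h4]; apply: Hcyc.
  by rewrite /is_4cycle -!sgn_neq0; do !split.
rewrite /pf.
apply: (bf_pf (sgn_tri arc p q) (sgn_tri arc p i) (sgn_tri arc p j) (sgn_tri arc q i)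
   (sgn_tri arc q j) (sgn_tri arc i j)).
- exact: ztri_of.
- exact: ztri_of.
- exact: ztri_of.
- exact: ztri_of.
- by rewrite !sgn_eq0 !Hpart !negbK; exact: pig.
- by have := cyc_of p q i j (uniq4 pq pi pj qi qj ij); rewrite (sk p j).
- have ji : j != i by rewrite eq_sym.
  by have := cyc_of p q j i (uniq4 pq pj pi qj qi ji); rewrite (sk i j) (sk p i).
- by have := cyc_of p i q j (uniq4 pi pq pj iq ij qj); rewrite (sk q i) (sk p j).
Qed.

Lemma back_rank n (arc : rel 'I_n) : oriented_graph arc ->
  forall p q, und arc p q -> (forall i j, pf (sgn_entry arc) p q i j = 0) ->
  skew_rank arc = 2%N.
Proof.
move=> Ho p q epq Hpf.
have sk := sgn_skew Ho; have dg := sgn_diag Ho.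
have E := bf_sq (sgn_tri arc p q) (etrans (sgn_neq0 _ _ _) epq).
have Hs : forall x y, sgn_entry arc x y = sgn_entry arc p q *
    (sgn_entry arc p x * sgn_entry arc q y - sgn_entry arc p y * sgn_entry arc q x).
  move=> x y; have H := Hpf x y; rewrite /pf in H.
  transitivity (sgn_entry arc p q * sgn_entry arc p q * sgn_entry arc x y -
     sgn_entry arc p q * (sgn_entry arc p q * sgn_entry arc x y
       - sgn_entry arc p x * sgn_entry arc q y + sgn_entry arc p y * sgn_entry arc q x)).
    by rewrite H mulr0 subr0 E mul1r.
  ring.
pose W : 'M[rat]_(n, 2) := \matrix_(x, c) (if val c == 0%N then (sgn_entry arc p x)%:~R
                                            else (sgn_entry arc q x)%:~R).
pose Z : 'M[rat]_(2, n) := \matrix_(c, y) (if val c == 0%N then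
                 (sgn_entry arc p q * sgn_entry arc q y)%:~R
                 else (- (sgn_entry arc p q * sgn_entry arc p y))%:~R).
have ES : skew_adj arc = W *m Z.
  apply/matrixP => x y; rewrite !mxE !big_ord_recr big_ord0 /= !mxE /= Hs.
  rewrite !(intrM, intrB, intrN); ring.
apply/eqP; rewrite /skew_rank eqn_leq; apply/andP; split.
  by rewrite ES; exact: rank_le2.
apply: (rank_ge2 (p := p) (q := q)).
- by rewrite mxE intr_eq0 sgn_neq0.
- by rewrite mxE dg.
- by rewrite mxE dg.
- by rewrite !mxE sk intrN.
Qed.

Theorem theorem3p3 (n : nat) (arc : rel 'I_n) :
  (5 <= n)%N ->
  oriented_graph arc ->
  connected_graph (und arc) ->
  (skew_rank arc = 2%N <->
   ((complete_multipartite 2 (und arc) \/ complete_multipartite 3 (und arc)) /\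
    (forall u1 u2 u3 u4 : 'I_n, is_4cycle (und arc) u1 u2 u3 u4 ->
        evenly_oriented4 arc u1 u2 u3 u4))).
Proof.
move=> Hn Ho Hc; split.
- move=> Hr; have Hpf := pf_int Ho Hr; split; last exact: even_of_pf Ho Hpf.
  have H0 : (0 < n)%N by apply: leq_trans Hn.
  have H1 : (1 < n)%N by apply: leq_trans Hn.
  have Hne : Ordinal H1 != Ordinal H0 by [].
  have [t Ht] := neighbor Hc Hne.
  exact: (mk_multi (und_sym arc) (und_irr Ho) (tr_of_pf Ho Hc Hpf) (k4_of_pf Hpf) Ht).
- case=> [[[part [Hsur Hp]] | [part [Hsur Hp]]] Hcyc].
  + have [p Hp0] := Hsur ord0; have [q Hq1] := Hsur ord_max.
    have epq : und arc p q by rewrite Hp Hp0 Hq1.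
    exact: (back_rank Ho epq (back_pf Ho (isT : (2 <= 3)%N) Hp Hcyc epq)).
  + have [p Hp0] := Hsur ord0; have [q Hq1] := Hsur (@Ordinal 3 1 isT).
    have epq : und arc p q by rewrite Hp Hp0 Hq1.
    exact: (back_rank Ho epq (back_pf Ho (isT : (3 <= 3)%N) Hp Hcyc epq)).
Qed.
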